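(* Consider the single-hop VAoI system described in the context, operated under the threshold policy with threshold $\Delta_T\in\{0,1,2,\dots\}$. Then the average VAoI is \[ \bar\Delta_{(\Delta_T)}=\frac12\,\frac{(\Delta_T-1)\Delta_T\,p_s}{(\Delta_T-1)p_s+\beta}+\frac{p_g}{p_s}, \] where $\beta=1-(1-p_s)(1-p_g)$.
   Context: Time is slotted, $t\in\{0,1,2,\dots\}$. An information source generates a new version in each slot independently with probability $p_g$; let $G_t\in\{0,1\}$ indicate whether a new version is generated in slot $t$. A transmitter holding the current source version may, in each slot $t$, attempt to send it to a receiver over an erasure channel; $a(t)\in\{0,1\}$ indicates an attempt, and each attempt succeeds independently with probability $p_s$. The Version Age of Information (VAoI) $\Delta(t)$ evolves as $\Delta(t+1)=G_t$ if $a(t)=1$ and the attempt succeeds, and $\Delta(t+1)=\Delta(t)+G_t$ otherwise. All version-generation and channel events are mutually independent. Assume $0<p_s<1$, $0<p_g<1$. The threshold policy with threshold $\Delta_T$ sets $a(t)=1$ iff $\Delta(t)\ge\Delta_T$. The average VAoI is $\bar\Delta_{(\Delta_T)}=\lim_{t\to\infty}\mathbb{E}[\Delta(t)]=\sum_{n\ge0}n\mu_n$, where $(\mu_n)$ is the stationary distribution of the (ergodic) Markov chain $\Delta(t)$. *)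

(* Defs.v *)
From Stdlib Require Import Reals.
From Coquelicot Require Import Coquelicot.
Open Scope R_scope.

(* One-slot dynamics of the VAoI under the threshold policy with threshold DT.
   [a]  : attempt indicator a(t) = (DT <= Delta(t)),
   [s]  : whether the channel attempt would succeed (prob. ps),
   [g]  : G_t in {0,1} (new version generated, prob. pg). *)
Definition attempt (DT n : nat) : bool := Nat.leb DT n.

Definition vaoi_next (DT n : nat) (s : bool) (g : nat) : nat :=
  if andb (attempt DT n) s then g else (n + g)%nat.

Definition ind (b : bool) : R := if b then 1 else 0.

Definition w_s (ps : R) (s : bool) : R := if s then ps else 1 - ps.
Definition w_g (pg : R) (g : nat) : R := if Nat.eqb g 1 then pg else 1 - pg.

(* Transition probability P(Delta(t+1) = m | Delta(t) = n) of the Markov chain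
   Delta(t) under the threshold policy: sum over the independent events
   (channel outcome s, generation G_t = g). When no attempt is made the
   channel outcome is irrelevant (vaoi_next ignores s). *)
Definition vaoi_trans (ps pg : R) (DT n m : nat) : R :=
  w_s ps true  * w_g pg 0 * ind (Nat.eqb (vaoi_next DT n true 0) m)
+ w_s ps true  * w_g pg 1 * ind (Nat.eqb (vaoi_next DT n true 1) m)
+ w_s ps false * w_g pg 0 * ind (Nat.eqb (vaoi_next DT n false 0) m)
+ w_s ps false * w_g pg 1 * ind (Nat.eqb (vaoi_next DT n false 1) m).

Definition stationary (ps pg : R) (DT : nat) (mu : nat -> R) : Prop :=
  (forall n, 0 <= mu n) /\
  is_series mu 1 /\
  (forall m, is_series (fun n => mu n * vaoi_trans ps pg DT n m) (mu m)).

(* Main.v *)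
Require Import Defs.
From Stdlib Require Import Reals Lra Lia.
From Coquelicot Require Import Coquelicot.
Open Scope R_scope.
Notation ind := Defs.ind.

Definition tt (ps:R) (DT n:nat) : R := if Nat.leb DT n then ps else 0.
Definition cc (ps pg:R) (DT n:nat) : R := if Nat.leb DT n then (1-ps)*(1-pg) else 1-pg.
Definition dd (ps pg:R) (DT n:nat) : R := if Nat.leb DT n then (1-ps)*pg else pg.

Lemma trans_decomp ps pg DT n m : vaoi_trans ps pg DT n m =
  tt ps DT n * ((1-pg) * ind (Nat.eqb 0 m) + pg * ind (Nat.eqb 1 m))
  + cc ps pg DT n * ind (Nat.eqb n m) + dd ps pg DT n * ind (Nat.eqb (S n) m).
Proof.
  unfold vaoi_trans, vaoi_next, attempt, tt, cc, dd, w_s, w_g.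
  change (Nat.eqb 0 1) with false; change (Nat.eqb 1 1) with true.
  destruct (Nat.leb DT n); cbv [andb]; rewrite ?Nat.add_0_r, ?Nat.add_1_r; ring.
Qed.

Lemma is_series_extR (a b : nat -> R) (l : R) :
  (forall n, a n = b n) -> is_series a l -> is_series b l.
Proof. intros H1 H2. exact (is_series_ext a b l H1 H2). Qed.

Lemma is_series_zero : is_series (fun _ : nat => 0) 0.
Proof.
  assert (H := is_series_scal_r 0 _ _ (is_series_geom 0 ltac:(rewrite Rabs_R0; lra))).
  rewrite Rmult_0_r in H. eapply is_series_extR; [|exact H]. intros; simpl; ring.
Qed.

Lemma sum_point (a : nat -> R) m N :
  sum_f_R0 (fun n => a n * ind (Nat.eqb n m)) N = if Nat.leb m N then a m else 0.
Proof.
  induction N; cbn [sum_f_R0].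
  - destruct m; simpl; unfold ind; simpl; ring.
  - rewrite IHN.
    destruct (Nat.leb_spec m N), (Nat.leb_spec m (S N)), (Nat.eqb_spec (S N) m);
      unfold ind; try lia; try (subst; ring); ring.
Qed.

Lemma decr_n_R (a : nat -> R) (n : nat) (l : R) : (0<n)%nat -> is_series (fun k => a (n+k)%nat) l ->
  is_series a (l + sum_f_R0 a (pred n)).
Proof.
  intros Hn H.
  set (s := sum_f_R0 a (pred n)).
  assert (H' : is_series (fun k => a (n+k)%nat) (plus (l + s) (opp s))).
  { replace (plus (l + s) (opp s)) with l. exact H.
    change (@eq R l (l + s + - s)). ring. }
  apply is_series_decr_n with n; auto. rewrite sum_n_Reals.
  exact H'.
Qed.

Lemma is_series_point (a : nat -> R) (m : nat) : is_series (fun n => a n * ind (Nat.eqb n m)) (a m).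
Proof.
  replace (a m) with (0 + sum_f_R0 (fun n => a n * ind (Nat.eqb n m)) (pred (S m))).
  2:{ simpl pred. rewrite sum_point, Nat.leb_refl. ring. }
  apply decr_n_R; [lia|].
  eapply is_series_extR; [|exact is_series_zero].
  intros k; unfold ind.
  replace (Nat.eqb (S m + k)%nat m) with false by (symmetry; apply Nat.eqb_neq; lia); ring.
Qed.

Lemma is_series_spoint (a : nat -> R) (m : nat) : is_series (fun n => a n * ind (Nat.eqb (S n) m))
  (match m with O => 0 | S m' => a m' end).
Proof.
  destruct m.
  - eapply is_series_extR; [|exact is_series_zero]. intros k; simpl; unfold ind; ring.
  - eapply is_series_extR; [|exact (is_series_point a m)]. intros k; reflexivity.
Qed.

Lemma isp (a b : nat -> R) (la lb : R) : is_series a la -> is_series b lb ->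
  is_series (fun n => a n + b n) (la + lb).
Proof. intros H1 H2. exact (is_series_plus _ _ _ _ H1 H2). Qed.

Lemma station_eq ps pg DT mu Tv m :
  is_series (fun n => mu n * vaoi_trans ps pg DT n m) (mu m) ->
  is_series (fun n => mu n * tt ps DT n) Tv ->
  mu m = Tv * ((1-pg) * ind (Nat.eqb 0 m) + pg * ind (Nat.eqb 1 m))
         + mu m * cc ps pg DT m
         + match m with O => 0 | S m' => mu m' * dd ps pg DT m' end.
Proof.
  intros Hs HT.
  assert (H := isp _ _ _ _ (isp _ _ _ _
      (is_series_scal_r ((1-pg) * ind (Nat.eqb 0 m) + pg * ind (Nat.eqb 1 m)) _ _ HT)
      (is_series_point (fun n => mu n * cc ps pg DT n) m))
      (is_series_spoint (fun n => mu n * dd ps pg DT n) m)).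
  apply is_series_unique in Hs.
  assert (H' : is_series (fun n => mu n * vaoi_trans ps pg DT n m)
     (Tv * ((1-pg) * ind (Nat.eqb 0 m) + pg * ind (Nat.eqb 1 m))
         + mu m * cc ps pg DT m
         + match m with O => 0 | S m' => mu m' * dd ps pg DT m' end)).
  { eapply is_series_extR; [|exact H]. intros n; cbv beta. rewrite trans_decomp. ring. }
  apply is_series_unique in H'. congruence.
Qed.

Lemma geom_prod r : 0 <= r < 1 ->
  is_series (fun n => INR (S n) * r ^ n) (/ (1 - r) * / (1 - r)).
Proof.
  intros Hr.
  assert (Hg : is_series (fun n => r ^ n) (/ (1 - r))).
  { apply is_series_geom. rewrite Rabs_pos_eq; lra. }
  assert (H := is_series_mult_pos _ _ _ _ Hg Hg
     (fun n => pow_le r n (proj1 Hr)) (fun n => pow_le r n (proj1 Hr))).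
  eapply is_series_extR; [|exact H]. intros n; simpl.
  rewrite (sum_eq _ (fun _ => r ^ n)).
  - rewrite sum_cte. simpl. ring.
  - intros i Hi. rewrite <- pow_add. f_equal. lia.
Qed.

Lemma main (ps pg b : R) (D : nat) (mu : nat -> R) :
  0 < ps < 1 -> 0 < pg < 1 -> b = 1 - (1 - ps) * (1 - pg) ->
  stationary ps pg (S D) mu ->
  is_series (fun n => INR n * mu n)
    (1 / 2 * (((INR (S D) - 1) * INR (S D) * ps) / ((INR (S D) - 1) * ps + b))
     + pg / ps).
Proof.
  intros Hps Hpg Hb [Hpos [Hsum Hst]].
  set (DT := S D).
  assert (Hex : ex_series (fun n => mu n * tt ps DT n)).
  { apply (@ex_series_le R_AbsRing R_CompleteNormedModule _ mu); [|exists 1; exact Hsum].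
    intros n. change (norm (mu n * tt ps DT n)) with (Rabs (mu n * tt ps DT n)).
    specialize (Hpos n). unfold tt; destruct (Nat.leb DT n).
    - rewrite Rabs_pos_eq; nra.
    - rewrite Rmult_0_r, Rabs_R0; lra. }
  set (Tv := Series (fun n => mu n * tt ps DT n)).
  assert (HT := Series_correct _ Hex). fold Tv in HT.
  assert (E : forall m, mu m = Tv * ((1-pg) * ind (Nat.eqb 0 m) + pg * ind (Nat.eqb 1 m))
         + mu m * cc ps pg DT m
         + match m with O => 0 | S m' => mu m' * dd ps pg DT m' end).
  { intros m. apply station_eq; auto. }
  clearbody Tv.
  set (y := mu 0%nat / (1 - pg)).
  assert (Hx : mu 0%nat = (1 - pg) * y) by (unfold y; field; lra).
  clearbody y.
  assert (HTv : Tv = pg * y).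
  { assert (E0 := E 0%nat). unfold cc, ind in E0. simpl in E0.
    assert (Tv * (1 - pg) = pg * mu 0%nat) by lra.
    rewrite Hx in H.
    apply (Rmult_eq_reg_r (1 - pg)); [|lra]. lra. }
  assert (HA : forall n, (1 <= n)%nat -> (n < DT)%nat -> mu n = y).
  { induction n as [|n IH]; intros H1 H2; [lia|].
    assert (En := E (S n)).
    unfold cc, dd in En. rewrite (proj2 (Nat.leb_gt DT (S n)) H2) in En.
    rewrite (proj2 (Nat.leb_gt DT n)) in En by lia.
    destruct n as [|n].
    - unfold ind in En; simpl in En. rewrite HTv, Hx in En.
      apply (Rmult_eq_reg_l pg); [|lra]. lra.
    - unfold ind in En; simpl in En. rewrite IH in En by lia.
      apply (Rmult_eq_reg_l pg); [|lra]. lra. }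
  set (c := (1 - ps) * (1 - pg)).
  assert (Hb0 : 0 < b) by (rewrite Hb; nra).
  assert (HB : b * mu DT = pg * y).
  { assert (En := E DT). unfold DT in En. unfold cc, dd in En.
    rewrite Nat.leb_refl in En. rewrite (proj2 (Nat.leb_gt (S D) D)) in En by lia.
    destruct D as [|D'].
    - unfold ind in En; simpl in En. rewrite HTv, Hx in En. unfold DT. rewrite Hb. lra.
    - unfold ind in En; simpl in En. rewrite (HA (S D')) in En by (unfold DT; lia).
      unfold DT. rewrite Hb. lra. }
  set (U := pg * y / b).
  set (r := (1 - ps) * pg / b).
  assert (HC : forall k, mu (DT + k)%nat = r ^ k * U).
  { induction k as [|k IH].
    - rewrite Nat.add_0_r. simpl. unfold U. rewrite <- HB. field. lra.
    - assert (En := E (DT + S k)%nat). rewrite Nat.add_succ_r in En.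
      unfold cc, dd in En.
      rewrite (proj2 (Nat.leb_le DT (S (DT + k)))) in En by lia.
      rewrite (proj2 (Nat.leb_le DT (DT + k))) in En by lia.
      replace (Nat.eqb 0 (S (DT + k))) with false in En by reflexivity.
      replace (Nat.eqb 1 (S (DT + k))) with false in En
        by (symmetry; apply Nat.eqb_neq; unfold DT; lia).
      unfold ind in En. rewrite Nat.add_succ_r. rewrite IH in En.
      assert (b * mu (S (DT + k)) = (1 - ps) * pg * (r ^ k * U)) by (rewrite Hb; lra).
      replace (mu (S (DT + k))) with (b * mu (S (DT + k)) / b) by (field; lra).
      rewrite H. unfold r. simpl. field. lra. }
  assert (Hr : 0 <= r < 1).
  { unfold r. split.
    - apply Rmult_le_pos; [nra|]. left; apply Rinv_0_lt_compat; lra.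
    - apply (Rmult_lt_reg_r b); [lra|]. unfold Rdiv. rewrite Rmult_assoc, Rinv_l by lra.
      rewrite Hb; nra. }
  assert (Hinv : / (1 - r) = b / ps).
  { unfold r. rewrite Hb. field. split; [lra|]. rewrite <- Hb; lra. }
  assert (Hg : is_series (fun n => r ^ n) (/ (1 - r))).
  { apply is_series_geom. rewrite Rabs_pos_eq; lra. }
  assert (Hfin : forall j, (j < DT)%nat -> sum_f_R0 mu j = (1 - pg) * y + INR j * y).
  { induction j as [|j IH]; intros Hj.
    - simpl. rewrite Hx. ring.
    - cbn [sum_f_R0]. rewrite IH by lia. rewrite (HA (S j)) by lia. rewrite S_INR. ring. }
  assert (Hnorm : 1 = / (1 - r) * U + ((1 - pg) * y + INR D * y)).
  { assert (Ht : is_series (fun k => mu (DT + k)%nat) (/ (1 - r) * U)).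
    { eapply is_series_extR; [|exact (is_series_scal_r U _ _ Hg)].
      intros k; cbv beta. rewrite HC. ring. }
    assert (H := decr_n_R _ DT _ ltac:(unfold DT; lia) Ht).
    unfold DT in H. simpl pred in H. rewrite Hfin in H by lia.
    apply is_series_unique in H. apply is_series_unique in Hsum. congruence. }
  rewrite Hinv in Hnorm. unfold U in Hnorm.
  set (d := INR D) in *.
  assert (Hd : 0 <= d) by apply pos_INR.
  assert (Hn2 : y * (d * ps + b) = ps).
  { transitivity (ps * (b / ps * (pg * y / b) + ((1 - pg) * y + d * y))).
    - rewrite Hb. field. split; [lra|]. intro H. assert (ps = 0) by nra. lra.
    - rewrite <- Hnorm. ring. }
  assert (Hy : y = ps / (d * ps + b)).
  { apply (Rmult_eq_reg_r (d*ps+b)); [|nra]. unfold Rdiv.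
    rewrite Rmult_assoc, Rinv_l by nra. rewrite Rmult_1_r. exact Hn2. }
  assert (Hfm : forall j, (j < DT)%nat ->
     sum_f_R0 (fun n => INR n * mu n) j = y * INR j * (INR j + 1) / 2).
  { induction j as [|j IH]; intros Hj.
    - simpl. field.
    - cbn [sum_f_R0]. rewrite IH by lia. rewrite (HA (S j)) by lia. rewrite S_INR. field. }
  assert (Htm : is_series (fun k => INR (DT + k) * mu (DT + k)%nat)
      (/ (1 - r) * (d * U) + / (1 - r) * / (1 - r) * U)).
  { eapply is_series_extR;
      [|exact (isp _ _ _ _ (is_series_scal_r (d * U) _ _ Hg)
                 (is_series_scal_r U _ _ (geom_prod r Hr)))].
    intros k; cbv beta. rewrite HC. unfold DT. rewrite plus_INR, !S_INR. fold d. ring. }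
  assert (H := decr_n_R (fun n => INR n * mu n) DT _ ltac:(unfold DT; lia) Htm).
  unfold DT in H. simpl pred in H. rewrite Hfm in H by lia.
  replace (1 / 2 * ((INR DT - 1) * INR DT * ps / ((INR DT - 1) * ps + b)) + pg / ps)
    with (/ (1 - r) * (d * U) + / (1 - r) * / (1 - r) * U + y * d * (d + 1) / 2).
  { exact H. }
  unfold DT. rewrite S_INR. fold d. rewrite Hinv. unfold U. rewrite Hy.
  assert (0 <= d * ps) by (apply Rmult_le_pos; lra).
  field. split; [lra|]. split; [lra|]. lra.
Qed.

(* Average VAoI = sum_n n * mu_n for the stationary distribution mu. *)
Theorem lemma2 (ps pg : R) (DT : nat) (mu : nat -> R) :
  0 < ps < 1 -> 0 < pg < 1 ->
  stationary ps pg DT mu ->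
  let beta := 1 - (1 - ps) * (1 - pg) in
  is_series (fun n => INR n * mu n)
    (1 / 2 * (((INR DT - 1) * INR DT * ps) / ((INR DT - 1) * ps + beta))
     + pg / ps).
Proof.
  intros Hps Hpg Hst beta.
  destruct DT as [|D].
  - assert (Hst1 : stationary ps pg 1 mu).
    { destruct Hst as [H1 [H2 H3]]. split; [exact H1|]. split; [exact H2|].
      intros m. eapply is_series_extR; [|exact (H3 m)]. intros n.
      f_equal. unfold vaoi_trans, vaoi_next, attempt.
      destruct n; reflexivity. }
    assert (H := main ps pg beta 0 mu Hps Hpg eq_refl Hst1).
    replace (1 / 2 * ((INR 0 - 1) * INR 0 * ps / ((INR 0 - 1) * ps + beta)) + pg / ps)
      with (1 / 2 * ((INR 1 - 1) * INR 1 * ps / ((INR 1 - 1) * ps + beta)) + pg / ps).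
    + exact H.
    + simpl. unfold Rdiv. ring.
  - exact (main ps pg beta D mu Hps Hpg eq_refl Hst).
Qed.
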